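(* Let $N_7$ be the connected, simply connected nilpotent Lie group with Lie algebra $\mathfrak{n}_7$ spanned by $X_1,\dots,X_7$ with non-trivial brackets $[X_1,X_3]=X_5,\ [X_1,X_4]=X_6,\ [X_1,X_5]=X_7,\ [X_2,X_3]=-X_6,\ [X_2,X_4]=X_5,\ [X_2,X_6]=X_7$. Let $(f_5^k)_k,(f_6^k)_k$ be sequences of nonzero real numbers with $\lim_k f_5^k=0$ and $\lim_k f_6^k=0$, and consider the sequence of coadjoint orbits $\mathcal O_k=\mathcal O_{(f_5^k,f_6^k)}$ in $\mathfrak{n}_7^*/N_7$. Then the set of limit points of $(\mathcal O_k)_k$ in $\mathfrak{n}_7^*/N_7$ is exactly $\Gamma_0$, the set of coadjoint orbits of functionals $f_1X_1^*+f_2X_2^*+f_3X_3^*+f_4X_4^*$, $(f_1,f_2,f_3,f_4)\in\mathbb R^4$.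
   Context: $N_7$ acts on $\mathfrak{n}_7^*$ by the coadjoint action $\mathrm{Ad}^*(g)f=f\circ\mathrm{Ad}(g^{-1})$, $X_1^*,\dots,X_7^*$ is the dual basis, and $\mathfrak{n}_7^*/N_7$ carries the quotient topology. The orbit $\mathcal O_{(f_5,f_6)}$ of $f_5X_5^*+f_6X_6^*$ (with $(f_5,f_6)\neq(0,0)$) equals $\{x_1X_1^*+x_2X_2^*+x_3X_3^*+x_4X_4^*+f_5X_5^*+f_6X_6^*: x_i\in\mathbb R\}$. Functionals vanishing on $X_5,X_6,X_7$ are fixed by the coadjoint action, so their orbits are singletons (these correspond to the unitary characters of $N_7$). *)

(* Defs.v *)
From HB Require Import structures.
From mathcomp Require Import all_boot all_order all_algebra.
From mathcomp Require Import all_classical all_reals all_analysis.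
Set Implicit Arguments. Unset Strict Implicit. Unset Printing Implicit Defensive.
Import Order.TTheory GRing.Theory Num.Theory.
Import numFieldNormedType.Exports.
Local Open Scope classical_set_scope.
Local Open Scope ring_scope.

Section N7.
Variable R : realType.

(* Structure constants of n_7 in the basis X_1..X_7 (0-indexed):
   [X_(i+1), X_(j+1)] = \sum_k sc i j k X_(k+1). *)
Definition sc (i j k : nat) : R :=
  match i, j, k with
  | 0, 2, 4 => 1 | 2, 0, 4 => -1
  | 0, 3, 5 => 1 | 3, 0, 5 => -1
  | 0, 4, 6 => 1 | 4, 0, 6 => -1
  | 1, 2, 5 => -1 | 2, 1, 5 => 1
  | 1, 3, 4 => 1 | 3, 1, 4 => -1
  | 1, 5, 6 => 1 | 5, 1, 6 => -1
  | _, _, _ => 0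
  end.

(* Elements of n_7 and of n_7^* are coordinate row vectors:
   x = \sum_i x_i X_(i+1);  for f in n_7^*, f_j = f(X_(j+1)). *)
Definition lie_bracket (x y : 'rV[R]_7) : 'rV[R]_7 :=
  \row_(k < 7) \sum_(i < 7) \sum_(j < 7) x 0 i * y 0 j * sc i j k.

(* Matrix of ad x acting on row vectors: y *m adm x = [x, y]. *)
Definition adm (x : 'rV[R]_7) : 'M[R]_7 :=
  \matrix_(j < 7, k < 7) \sum_(i < 7) x 0 i * sc i j k.

(* Ad(exp x) = e^{ad x} (finite sum since ad x is nilpotent on R^7). *)
Definition Adm (x : 'rV[R]_7) : 'M[R]_7 :=
  \sum_(n < 8) (n`!%:R)^-1 *: (adm x) ^+ n.

(* N_7 is parametrized by exponential coordinates g = exp x (exp is a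
   diffeomorphism n_7 -> N_7).  Coadjoint action:
   Ad^*(exp x) f = f o Ad(exp x)^{-1} = f o e^{-ad x}.
   (f o A)(X_(j+1)) = \sum_k A_jk f_k, i.e. row vector f *m A^T. *)
Definition coad (x f : 'rV[R]_7) : 'rV[R]_7 := f *m (Adm (- x))^T.

Definition coadj_orbit (f : 'rV[R]_7) : set 'rV[R]_7 := [set coad x f | x in setT].

Definition is_orbit (O : set 'rV[R]_7) : Prop := exists f, O = coadj_orbit f.

(* Open sets of the orbit space n_7^*/N_7 with the quotient topology:
   collections of orbits whose union is open in n_7^*. *)
Definition quot_open (U : set (set 'rV[R]_7)) : Prop :=
  (forall O, U O -> is_orbit O) /\ open (\bigcup_(O in U) O).

Definition orbit_converges (Ok : nat -> set 'rV[R]_7) (O : set 'rV[R]_7) : Prop :=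
  forall U, quot_open U -> U O -> exists N, forall k, (N <= k)%N -> U (Ok k).

Definition functional (a1 a2 a3 a4 a5 a6 a7 : R) : 'rV[R]_7 :=
  \row_(i < 7) nth 0 [:: a1; a2; a3; a4; a5; a6; a7] i.

End N7.

(* Main.v *)
Require Import Defs.
From HB Require Import structures.
From mathcomp Require Import all_boot all_order all_algebra.
From mathcomp Require Import all_classical all_reals all_analysis.
From mathcomp Require Import ring lra zify.
Import Order.TTheory GRing.Theory Num.Theory.
Import numFieldNormedType.Exports.
Local Open Scope classical_set_scope.
Local Open Scope ring_scope.
Set Implicit Arguments. Unset Strict Implicit.
Section S.
Variable R : realType.
Definition admF (a0 a1 a2 a3 a4 a5 a6 : R) (j k : nat) : R :=
  match j, k with
  | 0, 4 => - a2 | 0, 5 => - a3 | 0, 6 => - a4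
  | 1, 4 => - a3 | 1, 5 => a2 | 1, 6 => - a5
  | 2, 4 => a0 | 2, 5 => - a1
  | 3, 4 => a1 | 3, 5 => a0
  | 4, 6 => a0 | 5, 6 => a1
  | _, _ => 0 end.
Definition Mx a0 a1 a2 a3 a4 a5 a6 : 'M[R]_7 := \matrix_(j < 7, k < 7) admF a0 a1 a2 a3 a4 a5 a6 j k.
Lemma admE a0 a1 a2 a3 a4 a5 a6 :
  adm (functional a0 a1 a2 a3 a4 a5 a6) = Mx a0 a1 a2 a3 a4 a5 a6.
Proof.
apply/matrixP => j k; rewrite !mxE.
rewrite !big_ord_recr big_ord0 /= !mxE /=.
case: j => [[|[|[|[|[|[|[|j]]]]]]] Hj] //;
case: k => [[|[|[|[|[|[|[|k]]]]]]] Hk] //=;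
rewrite ?mulr0 ?mulr1 ?mulrN1 ?add0r ?addr0 //.
Qed.
Definition M2F (a0 a1 a2 a3 a4 a5 a6 : R) (j k : nat) : R :=
  match j, k with
  | 0, 6 => - a2 * a0 - a3 * a1
  | 1, 6 => - a3 * a0 + a2 * a1
  | 2, 6 => a0 * a0 - a1 * a1
  | 3, 6 => a1 * a0 + a0 * a1
  | _, _ => 0 end.
Lemma Mx2 a0 a1 a2 a3 a4 a5 a6 : Mx a0 a1 a2 a3 a4 a5 a6 ^+ 2 = \matrix_(j<7,k<7) M2F a0 a1 a2 a3 a4 a5 a6 j k.
Proof.
rewrite expr2; apply/matrixP => j k; rewrite !mxE.
rewrite !big_ord_recr big_ord0 /= !mxE /=.
case: j => [[|[|[|[|[|[|[|j]]]]]]] Hj] //;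
case: k => [[|[|[|[|[|[|[|k]]]]]]] Hk] //=;
rewrite ?mulr0 ?mul0r ?add0r ?addr0 //; ring.
Qed.
Lemma Mx3 a0 a1 a2 a3 a4 a5 a6 : Mx a0 a1 a2 a3 a4 a5 a6 ^+ 3 = 0.
Proof.
rewrite exprS Mx2; apply/matrixP => j k; rewrite !mxE.
rewrite !big_ord_recr big_ord0 /= !mxE /=.
case: j => [[|[|[|[|[|[|[|j]]]]]]] Hj] //;
case: k => [[|[|[|[|[|[|[|k]]]]]]] Hk] //=;
rewrite ?mulr0 ?mul0r ?add0r ?addr0 //.
Qed.
Lemma admN (x : 'rV[R]_7) : adm (- x) = - adm x.
Proof.
apply/matrixP => j k; rewrite !mxE -sumrN; apply: eq_bigr => i _.
by rewrite !mxE mulNr.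
Qed.
Lemma AdmNE a0 a1 a2 a3 a4 a5 a6 :
  Adm (- functional a0 a1 a2 a3 a4 a5 a6) =
  1 - Mx a0 a1 a2 a3 a4 a5 a6 + 2^-1 *: Mx a0 a1 a2 a3 a4 a5 a6 ^+ 2.
Proof.
rewrite /Adm admN admE.
have H3 n : (3 <= n)%N -> (- Mx a0 a1 a2 a3 a4 a5 a6) ^+ n = 0.
  move=> Hn; rewrite exprNn -(subnK Hn) !exprD Mx3 !mulr0 //.
rewrite !big_ord_recr big_ord0 /= (H3 3) // (H3 4) // (H3 5) // (H3 6) // (H3 7) // !scaler0 !addr0 add0r.
rewrite expr0 expr1 sqrrN /=.
have -> : 0`! = 1%N by [].
have -> : 1`! = 1%N by [].
have -> : 2`! = 2%N by [].
by rewrite invr1 !scale1r.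
Qed.
Lemma coadE (a0 a1 a2 a3 a4 a5 a6 b0 b1 b2 b3 b4 b5 b6 : R) :
  coad (functional a0 a1 a2 a3 a4 a5 a6) (functional b0 b1 b2 b3 b4 b5 b6) =
  functional
   (b0 + a2 * b4 + a3 * b5 + a4 * b6 + 2^-1 * (- a2 * a0 - a3 * a1) * b6)
   (b1 + a3 * b4 - a2 * b5 + a5 * b6 + 2^-1 * (- a3 * a0 + a2 * a1) * b6)
   (b2 - a0 * b4 + a1 * b5 + 2^-1 * (a0 * a0 - a1 * a1) * b6)
   (b3 - a1 * b4 - a0 * b5 + 2^-1 * (a1 * a0 + a0 * a1) * b6)
   (b4 - a0 * b6)
   (b5 - a1 * b6)
   b6.
Proof.
rewrite /coad AdmNE Mx2; apply/matrixP => i j; rewrite !mxE.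
rewrite !big_ord_recr big_ord0 /= !mxE /=.
case: j => [[|[|[|[|[|[|[|j]]]]]]] Hj] //=; ring.
Qed.
Lemma openP (A : set 'rV[R]_7) : open A <->
  (forall p, A p -> exists2 e : R, 0 < e & forall q : 'rV[R]_7, (forall j, `|p 0 j - q 0 j| < e) -> A q).
Proof.
rewrite openE; split.
- move=> H p Ap; have := H p Ap; rewrite /interior => /nbhs_ballP [e e0 He].
  exists e => // q Hq; apply: He; split => // i j.
  rewrite (ord1 i); exact: Hq.
- move=> H p Ap; rewrite /interior; apply/nbhs_ballP.
  have [e e0 He] := H p Ap; exists e => // q [_ Hq]; apply: He => j; exact: Hq.
Qed.
Lemma D0 (b4 b5 : R) : b4 != 0 -> b4 * b4 + b5 * b5 != 0.
Proof.
move=> h; have h1 : 0 < b4 * b4 by rewrite -expr2 exprn_even_gt0.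
have h2 : 0 <= b5 * b5 by rewrite -expr2 sqr_ge0.
rewrite gt_eqF //; lra.
Qed.
Lemma ex_func (p : 'rV[R]_7) : exists a0 a1 a2 a3 a4 a5 a6,
  p = functional a0 a1 a2 a3 a4 a5 a6.
Proof.
exists (p 0 (inord 0)), (p 0 (inord 1)), (p 0 (inord 2)), (p 0 (inord 3)),
  (p 0 (inord 4)), (p 0 (inord 5)), (p 0 (inord 6)).
apply/matrixP => i j; rewrite (ord1 i) mxE.
case: j => [[|[|[|[|[|[|[|j]]]]]]] Hj] //=; congr (p _ _); apply/val_inj; by rewrite /= inordK.
Qed.
Lemma fE (a0 a1 a2 a3 a4 a5 a6 : R) k : (k < 7)%N ->
  functional a0 a1 a2 a3 a4 a5 a6 0 (inord k) = nth 0 [:: a0; a1; a2; a3; a4; a5; a6] k.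
Proof. by move=> hk; rewrite mxE inordK. Qed.
Lemma coad0 (p : 'rV[R]_7) : coad 0 p = p.
Proof.
have [b0 [b1 [b2 [b3 [b4 [b5 [b6 ->]]]]]]] := ex_func p.
have -> : (0 : 'rV[R]_7) = functional 0 0 0 0 0 0 0.
  apply/matrixP => i j; rewrite !mxE; case: j => [[|[|[|[|[|[|[|j]]]]]]] Hj] //=.
rewrite coadE; f_equal; ring.
Qed.
Lemma coad_inv (x g : 'rV[R]_7) :
  coad x g 0 (inord 6) = g 0 (inord 6) /\
  (g 0 (inord 6) = 0 -> coad x g 0 (inord 4) = g 0 (inord 4) /\
                        coad x g 0 (inord 5) = g 0 (inord 5)).
Proof.
have [a0 [a1 [a2 [a3 [a4 [a5 [a6 ->]]]]]]] := ex_func x.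
have [b0 [b1 [b2 [b3 [b4 [b5 [b6 ->]]]]]]] := ex_func g.
rewrite coadE !fE //=; split => // ->; split; ring.
Qed.
Lemma orbit_gen (b0 b1 b2 b3 b4 b5 : R) : b4 != 0 ->
  coadj_orbit (functional b0 b1 b2 b3 b4 b5 0) =
  [set p | exists y0 y1 y2 y3, p = functional y0 y1 y2 y3 b4 b5 0].
Proof.
move=> h4; have hD : b4 * b4 + b5 * b5 != 0 by apply: D0.
apply/seteqP; split.
- move=> p [x _ <-].
  have [a0 [a1 [a2 [a3 [a4 [a5 [a6 ->]]]]]]] := ex_func x.
  rewrite coadE.
  exists (b0 + a2 * b4 + a3 * b5 + a4 * 0 + 2^-1 * (- a2 * a0 - a3 * a1) * 0),
   (b1 + a3 * b4 - a2 * b5 + a5 * 0 + 2^-1 * (- a3 * a0 + a2 * a1) * 0),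
   (b2 - a0 * b4 + a1 * b5 + 2^-1 * (a0 * a0 - a1 * a1) * 0),
   (b3 - a1 * b4 - a0 * b5 + 2^-1 * (a1 * a0 + a0 * a1) * 0).
  f_equal; ring.
- move=> p [y0 [y1 [y2 [y3 ->]]]].
  set D := b4 * b4 + b5 * b5.
  set u := y0 - b0; set v := y1 - b1; set s := y2 - b2; set t := y3 - b3.
  exists (functional (- (s * b4 + t * b5) / D) ((s * b5 - t * b4) / D)
                     ((u * b4 - v * b5) / D) ((u * b5 + v * b4) / D) 0 0 0) => //.
  rewrite coadE; rewrite /u /v /s /t /D; f_equal; field; exact: hD.
Qed.
Lemma orbit_char (a0 a1 a2 a3 : R) :
  coadj_orbit (functional a0 a1 a2 a3 0 0 0) = [set functional a0 a1 a2 a3 0 0 0].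
Proof.
apply/seteqP; split.
- move=> p [x _ <-].
  have [c0 [c1 [c2 [c3 [c4 [c5 [c6 ->]]]]]]] := ex_func x.
  rewrite coadE /=; f_equal; ring.
- move=> p ->; exists 0 => //; exact: coad0.
Qed.


End S.
Unset Implicit Arguments. Set Strict Implicit.
Theorem mainTheorem3 (R : realType) (f5 f6 : nat -> R) :
  (forall k, f5 k != 0) -> (forall k, f6 k != 0) ->
  f5 @ \oo --> (0 : R) -> f6 @ \oo --> (0 : R) ->
  forall O : set 'rV[R]_7, is_orbit O ->
    (orbit_converges (fun k => coadj_orbit (functional 0 0 0 0 (f5 k) (f6 k) 0)) O <->
     exists a1 a2 a3 a4 : R, O = coadj_orbit (functional a1 a2 a3 a4 0 0 0)).
Proof.
move=> H5 H6 c5 c6 O [f ->].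
have [b0 [b1 [b2 [b3 [b4 [b5 [b6 ->]]]]]]] := ex_func f.
have OkE k : coadj_orbit (functional 0 0 0 0 (f5 k) (f6 k) 0) =
   [set p | exists y0 y1 y2 y3, p = functional y0 y1 y2 y3 (f5 k) (f6 k) 0].
  exact: orbit_gen.
split.
- move=> Hconv.
  suff [e6 [e4 e5]] : b6 = 0 /\ b4 = 0 /\ b5 = 0 by subst; exists b0, b1, b2, b3.
  case: (pselect (b6 = 0 /\ b4 = 0 /\ b5 = 0)) => // Hne; exfalso.
  set m := Num.max `|b4| `|b5|; set r := m / 2.
  pose cond := fun q : 'rV[R]_7 => q 0 (inord 6) != 0 \/
     (`|q 0 (inord 4) - b4| < r /\ `|q 0 (inord 5) - b5| < r).
  pose U := [set Oq | is_orbit Oq /\ exists q, Oq q /\ cond q].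
  have condinv : forall g x y, cond (coad x g) -> cond (coad y g).
    move=> g x y; have [h6x h45x] := coad_inv x g; have [h6y h45y] := coad_inv y g.
    rewrite /cond h6x h6y; case: (eqVneq (g 0 (inord 6)) 0) => [e|ne]; last by left.
    by move: (h45x e) (h45y e) => [-> ->] [-> ->].
  have inU : forall q', cond q' -> (\bigcup_(O in U) O) q'.
    move=> q' hq'; exists (coadj_orbit q').
      split; first by exists q'.
      by exists q'; split => //; exists 0 => //; exact: coad0.
    by exists 0 => //; exact: coad0.
  have hopen : quot_open U.
    split; first by move=> Oq [].
    apply/openP => pp [Oq [[g ->] [q [[x _ <-] hq]]] [y _ <-]].
    have := condinv g x y hq; set p := coad y g => hp.
    case: hp => [h6 | [h4 h5]].
    + exists `|p 0 (inord 6)|; first by rewrite normr_gt0.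
      move=> q' hq'; apply: inU; left; apply/eqP => e.
      by move: (hq' (inord 6)); rewrite e subr0 ltxx.
    + exists (Num.min (r - `|p 0 (inord 4) - b4|) (r - `|p 0 (inord 5) - b5|)).
        by rewrite lt_min !subr_gt0 h4 h5.
      move=> q' hq'; apply: inU; right.
      move: (hq' (inord 4)) (hq' (inord 5)); rewrite !lt_min => /andP[h44 _] /andP[_ h55].
      rewrite distrC in h44; rewrite distrC in h55.
      split.
      * have -> : q' 0 (inord 4) - b4 = (q' 0 (inord 4) - p 0 (inord 4)) + (p 0 (inord 4) - b4) by ring.
        apply: le_lt_trans (ler_normD _ _) _; lra.
      * have -> : q' 0 (inord 5) - b5 = (q' 0 (inord 5) - p 0 (inord 5)) + (p 0 (inord 5) - b5) by ring.
        apply: le_lt_trans (ler_normD _ _) _; lra.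
  have UO : U (coadj_orbit (functional b0 b1 b2 b3 b4 b5 b6)).
    split; first by exists (functional b0 b1 b2 b3 b4 b5 b6).
    exists (functional b0 b1 b2 b3 b4 b5 b6); split; first by exists 0 => //; exact: coad0.
    rewrite /cond !fE //=; case: (eqVneq b6 0) => [e6|]; last by left.
    right; have m0 : 0 < m.
      rewrite /m lt_max !normr_gt0; apply/orP.
      case: (eqVneq b4 0) => [e4|]; last by left.
      case: (eqVneq b5 0) => [e5|]; last by right.
      by exfalso; apply: Hne.
    rewrite !subrr normr0 /r; split; lra.
  have [N HN] := Hconv U hopen UO.
  have condk : forall k, (N <= k)%N -> `|f5 k - b4| < r /\ `|f6 k - b5| < r.
    move=> k hk; have [_ [q [Oq hq]]] := HN k hk.
    move: Oq; rewrite /= OkE => -[y0 [y1 [y2 [y3 eq]]]].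
    by move: hq; rewrite /cond eq !fE //= eqxx /= => -[].
  have r0 : 0 < r.
    have [h _] := condk N (leqnn N); exact: le_lt_trans (normr_ge0 _) h.
  have [N5 _ HN5] := cvgr0_norm_lt _ c5 _ r0.
  have [N6 _ HN6] := cvgr0_norm_lt _ c6 _ r0.
  pose k := maxn N (maxn N5 N6).
  have [hk5 hk6] := condk k (leq_maxl _ _).
  have g5 : `|f5 k| < r by apply: HN5; rewrite /= /k; lia.
  have g6 : `|f6 k| < r by apply: HN6; rewrite /= /k; lia.
  have hb4 : `|b4| < m.
    have -> : b4 = - (f5 k - b4) + f5 k by ring.
    apply: le_lt_trans (ler_normD _ _) _; rewrite normrN; rewrite /r in hk5 g5; lra.
  have hb5 : `|b5| < m.
    have -> : b5 = - (f6 k - b5) + f6 k by ring.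
    apply: le_lt_trans (ler_normD _ _) _; rewrite normrN; rewrite /r in hk6 g6; lra.
  have : m < m by rewrite {1}/m gt_max hb4 hb5.
  by rewrite ltxx.
- move=> [a0 [a1 [a2 [a3 Heq]]]] U [Uorb Uopen] UO.
  rewrite Heq orbit_char in UO.
  have Wa : (\bigcup_(O in U) O) (functional a0 a1 a2 a3 0 0 0) by exists [set functional a0 a1 a2 a3 0 0 0].
  have [e e0 He] := (openP _).1 Uopen _ Wa.
  have [N5 _ HN5] := cvgr0_norm_lt _ c5 _ e0.
  have [N6 _ HN6] := cvgr0_norm_lt _ c6 _ e0.
  exists (maxn N5 N6) => k hk.
  have hp : (\bigcup_(O in U) O) (functional a0 a1 a2 a3 (f5 k) (f6 k) 0).
    apply: He => j; rewrite !mxE; case: j => [[|[|[|[|[|[|[|j]]]]]]] Hj] //=;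
      rewrite ?subrr ?normr0 // sub0r normrN.
    + by apply: HN5; rewrite /=; lia.
    + by apply: HN6; rewrite /=; lia.
  case: hp => Oq UOq Oqp.
  have [g Og] := Uorb Oq UOq.
  rewrite Og in Oqp UOq; case: Oqp => z _ hz.
  have [g0 [g1 [g2 [g3 [g4 [g5 [g6 eg]]]]]]] := ex_func g.
  have [h6 h45] := coad_inv z g.
  rewrite hz eg !fE //= in h6 h45.
  have [e4 e5] := h45 (esym h6).
  rewrite eg -h6 -e4 -e5 orbit_gen // in UOq.
  by rewrite /= orbit_gen.
Qed.
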